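(* Let $G$ be a finite group and let $C(G)^*$ denote the set of non-trivial cyclic subgroups of $G$. Suppose that $m_G(H_1)=m_G(H_2)$ for all $H_1,H_2\in C(G)^*$. Then $G$ is a $p$-group for some prime $p$, every element of order $p$ of $G$ is central (i.e. $\Omega_1(G)\leq Z(G)$), and in fact $\Omega_1(G)=Z(G)$. Moreover, if $|G|=p^n$, $\exp(G)=p^m$ and $|Z(G)|=p^k$, then $k\leq n-2m+2$.
   Context: For a finite group $G$ and a subgroup $H\leq G$, the Chermak-Delgado measure of $H$ in $G$ is $m_G(H)=|H|\,|C_G(H)|$, where $C_G(H)$ is the centralizer of $H$ in $G$. For a $p$-group $G$, $\Omega_1(G)$ denotes the subgroup generated by all elements of order $p$ in $G$, and $Z(G)$ is the center of $G$. *)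

(* Defs.v *)
From mathcomp Require Import all_boot all_fingroup all_solvable.
Set Implicit Arguments. Unset Strict Implicit. Unset Printing Implicit Defensive.
Local Open Scope group_scope.

Definition CDmeasure (gT : finGroupType) (G H : {set gT}) : nat :=
  (#|H| * #|'C_G(H)|)%N.

(* Main.v *)
Require Import Defs.
From mathcomp Require Import all_boot all_fingroup all_solvable.
From mathcomp Require Import zify.
Local Open Scope group_scope.

Lemma meas_cycle (gT : finGroupType) (G : {group gT}) (x : gT) :
  CDmeasure G <[x]> = (#[x] * #|'C_G[x]|)%N.
Proof. by rewrite /CDmeasure cent_cycle. Qed.

Theorem theorem1p1 (gT : finGroupType) (G : {group gT}) :
  (forall H1 H2 : {group gT},
      H1 \subset G -> cyclic H1 -> H1 :!=: 1 ->
      H2 \subset G -> cyclic H2 -> H2 :!=: 1 ->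
      CDmeasure G H1 = CDmeasure G H2) ->
  exists p : nat,
    [/\ prime p, p.-group G,
        'Ohm_1(G) \subset 'Z(G),
        'Ohm_1(G) = 'Z(G) &
        forall n m k : nat,
          #|G| = (p ^ n)%N -> exponent G = (p ^ m)%N -> #|'Z(G)| = (p ^ k)%N ->
          (k + 2 * m <= n + 2)%N].
Proof.
move=> hyp.
have hm : forall x y, x \in G -> y \in G -> x != 1 -> y != 1 ->
    (#[x] * #|'C_G[x]| = #[y] * #|'C_G[y]|)%N.
  move=> x y Gx Gy nx ny; rewrite -!meas_cycle.
  by apply: (hyp <[x]>%G <[y]>%G); rewrite ?cycle_subG ?cycle_cyclic ?cycle_eq1.
have [G1 | ntG] := eqsVneq G 1.
  exists 2; have O1 : 'Ohm_1(G) = 1 by apply/trivgP; rewrite -G1 Ohm_sub.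
  have Z1 : 'Z(G) = 1 by apply/trivgP; rewrite -G1 center_sub.
  split => //; first by rewrite G1 pgroup1.
  - by rewrite O1 sub1G.
  - by rewrite O1; apply/esym/trivgP; rewrite -G1 center_sub.
  move=> n m k; rewrite G1 exponent1 center1 cards1 => hn hm' hk.
  have e0 : forall j, 1%N = (2 ^ j)%N -> j = 0%N.
    by move=> j /esym /eqP; rewrite -{2}(expn0 2) eqn_exp2l // => /eqP.
  by rewrite (e0 _ hn) (e0 _ hm') (e0 _ hk).
set p := pdiv #|G|.
have hp : prime p by apply: pdiv_prime; rewrite cardG_gt1.
have p1 := prime_gt1 hp.
have pG : p.-group G.
  apply/pgroupP => q q_pr qG; rewrite inE /=; apply/negPn/negP => nqp.
  have [P sylP] := Sylow_exists p G.
  have pP := pHall_pgroup sylP; have sPG := pHall_sub sylP.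
  have cP := card_Hall sylP.
  have ntP : P :!=: 1.
    rewrite -cardG_gt1 cP p_part_gt1 mem_primes hp cardG_gt0 /=.
    by apply: pdiv_dvd.
  have ntZ : 'Z(P) != 1 by rewrite center_nil_eq1 // (pgroup_nil pP).
  have [_ pZ _] := pgroup_pdiv (pgroupS (center_sub P) pP) ntZ.
  have [x Zx ox] := Cauchy hp pZ.
  have Px : x \in P by apply: (subsetP (center_sub P)).
  have Gx : x \in G by apply: (subsetP sPG).
  have [y Gy oy] := Cauchy q_pr qG.
  have nx : x != 1 by rewrite -order_eq1 ox eqn_leq leqNgt p1.
  have ny : y != 1 by rewrite -order_eq1 oy eqn_leq leqNgt (prime_gt1 q_pr).
  have e := hm x y Gx Gy nx ny; rewrite ox oy in e.
  have sPC : P \subset 'C_G[x].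
    rewrite subsetI sPG sub_cent1.
    by move: Zx; rewrite inE => /andP [].
  have l1 : (logn p #|G| < logn p (p * #|'C_G[x]|))%N.
    rewrite lognM ?cardG_gt0 ?prime_gt0 // (logn_prime p hp) eqxx add1n ltnS.
    by rewrite -logn_part -cP dvdn_leq_log ?cardG_gt0 ?cardSg.
  have l2 : (logn p (q * #|'C_G[y]|) <= logn p #|G|)%N.
    rewrite lognM ?cardG_gt0 ?prime_gt0 // (logn_prime p q_pr) eq_sym (negPf nqp) add0n.
    by rewrite dvdn_leq_log ?cardG_gt0 ?cardSg ?subcent1_sub.
  by move: (leq_trans l1 (eq_ind_r (fun t => logn p t <= logn p #|G|)%N l2 e)); rewrite ltnn.
have ntZ : 'Z(G) != 1 by rewrite center_nil_eq1 // (pgroup_nil pG).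
have [_ pZ _] := pgroup_pdiv (pgroupS (center_sub G) pG) ntZ.
have [z Zz oz] := Cauchy hp pZ.
have CZ : forall x, x \in 'Z(G) -> 'C_G[x] = G.
  move=> x; rewrite inE => /andP [_ cx]; apply/setIidPl; by rewrite sub_cent1.
have Gz : z \in G by apply: (subsetP (center_sub G)).
have nz : z != 1 by rewrite -order_eq1 oz eqn_leq leqNgt p1.
have key : forall x, x \in G -> x != 1 -> (#[x] * #|'C_G[x]| = p * #|G|)%N.
  by move=> x Gx nx; rewrite (hm x z Gx Gz nx nz) oz CZ.
have zp : forall x, x \in 'Z(G) -> x ^+ p = 1.
  move=> x Zx; have [->|nx] := eqVneq x 1; first by rewrite expg1n.
  have Gx : x \in G by apply: (subsetP (center_sub G)).
  have := key x Gx nx; rewrite CZ // => /eqP; rewrite eqn_pmul2r ?cardG_gt0 // => /eqP <-.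
  by rewrite expg_order.
have sOZ : 'Ohm_1(G) \subset 'Z(G).
  rewrite (OhmE 1 pG) gen_subG; apply/subsetP => x /LdivP [Gx xp].
  have [->|nx] := eqVneq x 1; first by rewrite group1.
  have ox : #[x] = p.
    apply/prime_nt_dvdP => //; first by rewrite order_eq1.
    by rewrite order_dvdn -(expn1 p) xp.
  have := key x Gx nx; rewrite ox => /eqP; rewrite eqn_pmul2l ?prime_gt0 // => /eqP eC.
  have CG : 'C_G[x] = G by apply/eqP; rewrite eqEcard subcent1_sub eC leqnn.
  by rewrite inE Gx -sub_cent1 -CG subsetIr.
exists p; split => //.
  apply/eqP; rewrite eqEsubset sOZ /=; apply/subsetP => x Zx.
  rewrite (OhmE 1 pG) mem_gen //; apply/LdivP; split; last by rewrite expn1 zp.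
  by apply: (subsetP (center_sub G)).
move=> n m k hn hm' hk.
have [g Gg eg] := exponent_witness (pgroup_nil pG).
have ng : g != 1.
  apply: contra ntG => /eqP g1; rewrite trivg_exponent eg g1 order1 //.
have hC := key g Gg ng; rewrite -eg hm' hn in hC.
have sZC : 'Z(G) \subset 'C_G[g].
  rewrite subsetI center_sub sub_cent1.
  have : G \subset 'C('Z(G)) by rewrite centsC subsetIr.
  by move/subsetP; apply.
have sMC : <[g]> * 'Z(G) \subset 'C_G[g] by rewrite mul_subG ?subcent1_cycle_sub.
have hI : (#|<[g]> :&: 'Z(G)| <= p)%N.
  have : cyclic (<[g]> :&: 'Z(G))%G by apply: cyclicS (subsetIl _ _) (cycle_cyclic g).
  case/cyclicP => h eh; rewrite eh -/(order h).
  have : h \in <[g]> :&: 'Z(G) by rewrite eh cycle_id.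
  rewrite inE => /andP [_ Zh].
  by apply: dvdn_leq; rewrite ?prime_gt0 // order_dvdn zp.
have h1 : (p ^ m * p ^ k <= #|'C_G[g]| * p)%N.
  rewrite -hk -hm' eg [(#[g] * _)%N](mul_cardG <[g]>%G 'Z(G)%G).
  by rewrite leq_mul // subset_leq_card.
rewrite -(leq_exp2l _ _ p1).
have -> : (p ^ (k + 2 * m) = p ^ m * (p ^ m * p ^ k))%N.
  by rewrite mulnA -!expnD addnC mul2n -addnn.
have -> : (p ^ (n + 2) = (p * p ^ n) * p)%N.
  by rewrite addn2 expnSr expnS.
rewrite -hC -mulnA leq_mul //.
Qed.
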